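(* Let $H$ be a finite index set with nonnegative weights $p_g$ ($g\in H$) having a unique maximum at $g^*$ (i.e. $p_{g^*}>p_g$ for all $g\ne g^*$). Let $\sigma\in C^1([0,\infty))$ be strictly increasing on $(0,\infty)$ with $\sigma'(x)>0$ for $x>0$, and suppose $\phi(x):=\sigma'(x)/x$ is continuous on $(0,\infty)$; write $\phi(0^+):=\lim_{x\downarrow0}\phi(x)\in(0,\infty]$. Consider $\max F(s)=\sum_g p_g\sigma(s_g)$ subject to $s_g\ge0$, $\sum_g s_g^2\le2$. (A) If $\phi$ is nondecreasing on $(0,\sqrt2]$, the unique maximizer is $s^\star_{g^*}=\sqrt2$, $s^\star_g=0$ for $g\ne g^*$ (realized by $\mathbf{u}=\frac1{\sqrt2}\mathbf{e}_{g^*}$, $\mathbf{v}=\frac1{\sqrt2}\mathbf{e}_{(g^* )^{-1}h}$). (B) If $\phi$ is strictly decreasing on $(0,\infty)$, the unique maximizer is $s^\star_g=\phi^{-1}(2\lambda/p_g)$ for all $g$ with $2\lambda/p_g<\phi(0^+)$, and $s^\star_g=0$ for all $g$ with $2\lambda/p_g\ge\phi(0^+)$ (when $\phi(0^+)<\infty$), where $\lambda>0$ is uniquely determined by $\sum_g(s^\star_g)^2=2$. In particular, if $\phi(0^+)=\infty$, all coordinates of $s^\star$ are strictly positive and $p_i>p_j$ implies $s^\star_i>s^\star_j>0$.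
   Context: In the paper, $H$ is a group, a target $h\in H$ is fixed, the collected training pairs are $(g,g^{-1}h)$ with probabilities $p_g$, the weight vector is $\mathbf{w}=[\mathbf{u};\mathbf{v}]\in\mathbb{R}^{2|H|}$ with $\|\mathbf{u}\|^2+\|\mathbf{v}\|^2=1$, and $s_g=u_g+v_{g^{-1}h}$; maximizing the energy is equivalent (up to a positive factor) to maximizing $F$. $\mathbf{e}_g$ denotes a standard basis vector. *)

(* Defs.v *)
From HB Require Import structures.
From mathcomp Require Import all_boot all_order all_algebra all_fingroup.
From mathcomp Require Import all_classical all_reals all_analysis.
Set Implicit Arguments. Unset Strict Implicit. Unset Printing Implicit Defensive.
Import Order.TTheory GRing.Theory Num.Theory.
Import numFieldNormedType.Exports.
Local Open Scope ring_scope.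
Local Open Scope classical_set_scope.

Section Defs.
Variables (R : realType) (T : finType).

Definition feasible (s : T -> R) : Prop :=
  (forall g, 0 <= s g) /\ \sum_(g : T) s g ^+ 2 <= 2.

Definition objF (p : T -> R) (sigma : R -> R) (s : T -> R) : R :=
  \sum_(g : T) p g * sigma (s g).

Definition is_maximizer p sigma (s : T -> R) : Prop :=
  feasible s /\ forall t, feasible t -> objF p sigma t <= objF p sigma s.

Definition unique_maximizer p sigma (s : T -> R) : Prop :=
  is_maximizer p sigma s /\ forall t, is_maximizer p sigma t -> t = s.
End Defs.

Definition phi0plus (R : realType) (phi : R -> R) : \bar R :=
  lim ((fun x => (phi x)%:E) @ 0^'+).

(* Main.v *)
Require Import Defs.
From HB Require Import structures.
From mathcomp Require Import all_boot all_order all_algebra all_fingroup.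
From mathcomp Require Import all_classical all_reals all_analysis.
From mathcomp Require Import ring lra.
Import Order.TTheory GRing.Theory Num.Theory.
Import numFieldNormedType.Exports.
Local Open Scope ring_scope.
Local Open Scope classical_set_scope.
Set Implicit Arguments. Unset Strict Implicit.
Lemma cmvt (R : realType) (sigma dsigma : R -> R) (a b : R) :
  a < b -> (forall x, a < x -> is_derive x 1 sigma (dsigma x)) ->
  {within `[a, b], continuous sigma} ->
  exists2 c, a < c < b & (sigma b - sigma a) * (2 * c) = dsigma c * (b ^+ 2 - a ^+ 2).
Proof.
move=> ab der cont.
set K := b ^+ 2 - a ^+ 2; set M := sigma b - sigma a.
pose h := (K \*: sigma - M \*: (id * id) : R -> R).
have hd : forall x, x \in `]a, b[%R -> is_derive x 1 h (K * dsigma x - M * (x * 1 + x * 1)).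
  move=> x; rewrite in_itv /= => /andP[ax xb].
  have d1 := der x ax.
  have d2 : is_derive x 1 (@id R * id) (id x *: 1 + id x *: 1) := is_deriveM (is_derive_id _ _) (is_derive_id _ _).
  have := is_deriveB (is_deriveZ K d1) (is_deriveZ M d2).
  done.
have hc : {within `[a, b], continuous h}.
  apply: within_continuousB.
    move=> x; apply: continuousZl_tmp; exact: cont.
  apply: continuous_subspaceT => x.
  apply: continuousZl_tmp; apply: continuousM; exact: cvg_id.
have [c] := MVT ab hd hc; rewrite in_itv /= => /andP[ac cb] e.
exists c; first by rewrite ac cb.
have : h b - h a = 0.
  have hE : forall x, h x = K * sigma x - M * (x * x) by [].
  rewrite !hE /K /M; ring.
rewrite e => /eqP; rewrite mulf_eq0 (subr_eq0 b a) (gt_eqF ab) orbF => /eqP.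
move=> E. lra.
Qed.
Lemma sig_right0 (R : realType) (sigma : R -> R) (d0 : R) :
  (fun t : R => (sigma t - sigma 0) / t) @ (0:R)^'+ --> d0 ->
  sigma x @[x --> (0:R)^'+] --> sigma 0.
Proof.
move=> H.
have H2 : (fun x => sigma 0 + x * ((sigma x - sigma 0) / x)) x @[x --> (0:R)^'+] --> sigma 0 + 0 * d0.
  apply: cvgD; first exact: cvg_cst.
  apply: cvgM => //; apply: cvg_at_right_filter; exact: cvg_id.
rewrite mul0r addr0 in H2; apply: cvg_trans H2.
apply: near_eq_cvg; near=> x.
have xp : 0 < x by near: x; exact: nbhs_right_gt.
rewrite mulrC divfK ?gt_eqF //; ring.
Unshelve. all: by end_near.
Qed.

Lemma sig_within (R : realType) (sigma dsigma : R -> R) (a b : R) :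
  0 <= a -> a < b -> (forall x : R, 0 < x -> is_derive x 1 sigma (dsigma x)) ->
  (fun t : R => (sigma t - sigma 0) / t) @ (0:R)^'+ --> dsigma 0 ->
  {within `[a, b], continuous sigma}.
Proof.
move=> a0 ab der d0.
have cx : forall x : R, 0 < x -> {for x, continuous sigma}.
  move=> x xp; apply: differentiable_continuous; apply/derivable1_diffP.
  by have := der x xp; case.
have [ap|a0'] := ltP 0 a.
  apply: derivable_within_continuous => x; rewrite in_itv /= => /andP[ax _].
  by have := der x (lt_le_trans ap ax); case.
have ae : a = 0 by apply/eqP; rewrite eq_le a0' a0.
apply/continuous_within_itvP => //; split.
- move=> x; rewrite in_itv /= => /andP[ax _]; apply: cx; exact: le_lt_trans ax.
- rewrite ae; exact: sig_right0 d0.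
- apply: cvg_at_left_filter; apply: cx; exact: le_lt_trans ab.
Qed.
Lemma le_sum1 (R : realType) (T : finType) (f : T -> R) i :
  (forall j, 0 <= f j) -> f i <= \sum_j f j.
Proof.
move=> f0; rewrite (bigD1 i) //= lerDl; apply: sumr_ge0 => j _; exact: f0.
Qed.

Lemma sqrt2_facts (R : realType) : 0 < Num.sqrt (2:R) /\ Num.sqrt (2:R) ^+ 2 = 2.
Proof. by rewrite sqrtr_gt0 sqr_sqrtr //; split. Qed.

Lemma feas_le (R : realType) (T : finType) (t : T -> R) g :
  feasible t -> t g <= Num.sqrt 2.
Proof.
move=> [t0 ts]; have := @le_sum1 _ _ (fun j => t j ^+ 2) g (fun j => sqr_ge0 (t j)).
have [s0 s2] := sqrt2_facts R; have := t0 g => tg0 H.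
have H2 : t g ^+ 2 <= 2 by apply: le_trans ts.
move: s0 s2; set r := Num.sqrt 2 => s0 s2.
rewrite -s2 in H2.
rewrite -(@ler_pXn2r _ 2) //; by rewrite nnegrE ?(ltW s0).
Qed.

Lemma partA (R : realType) (T : finType) (gs : T) (p : T -> R) (sigma : R -> R) :
 (forall g, 0 <= p g) -> \sum_g p g = 1 -> (forall g, g != gs -> p g < p gs) ->
 sigma 0 < sigma (Num.sqrt 2) ->
 (forall s, 0 <= s <= Num.sqrt 2 -> sigma s - sigma 0 <= (sigma (Num.sqrt 2) - sigma 0) / 2 * s ^+ 2) ->
 unique_maximizer p sigma (fun g => if g == gs then Num.sqrt 2 else 0).
Proof.
move=> p0 p1 pmax sig hb.
have [r0 r2] := sqrt2_facts R.
set r := Num.sqrt 2 in r0 r2 sig hb *.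
set K := (sigma r - sigma 0) / 2.
have K0 : 0 < K by rewrite /K; apply: divr_gt0; rewrite ?subr_gt0.
have hb' : forall s, 0 <= s <= r -> sigma s - sigma 0 <= K * s ^+ 2 by [].
have hK : 2 * K = sigma r - sigma 0 by rewrite /K; field.
clearbody K; clear hb.
set ss := fun g => _.
have fs : feasible ss.
  split=> [g|]; first by rewrite /ss; case: (g == gs) => //; exact: ltW.
  rewrite (bigD1 gs) //= /ss eqxx big1 ?addr0 ?r2 // => g /negbTE ->; exact: expr0n.
have Fs : objF p sigma ss = sigma 0 + 2 * K * p gs.
  rewrite /objF (bigD1 gs) //= /ss eqxx.
  rewrite (eq_bigr (fun g => p g * sigma 0)); last by move=> g /negbTE ->.
  rewrite -mulr_suml.
  have : \sum_(i | i != gs) p i = 1 - p gs by rewrite -p1 [in RHS](bigD1 gs) //=; ring.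
  move=> ->; rewrite -[sigma r](subrK (sigma 0)) -hK; ring.
have Ft : forall t, feasible t -> objF p sigma t <= sigma 0 + K * \sum_g p g * t g ^+ 2.
  move=> t ft; rewrite /objF.
  have -> : sigma 0 = \sum_g p g * sigma 0 by rewrite -mulr_suml p1 mul1r.
  rewrite mulr_sumr -big_split /=; apply: ler_sum => g _.
  have H : sigma (t g) - sigma 0 <= K * t g ^+ 2.
    by apply: hb'; rewrite (@feas_le _ _ t g ft) (ft.1 g).
  rewrite mulrCA -mulrDr; apply: ler_wpM2l => //; lra.
have pgs0 : 0 < p gs.
  case: (boolP [exists g, g != gs]) => [/existsP [g /[dup] gn /pmax]|].
    by apply: le_lt_trans; exact: p0.
  rewrite negb_exists => /forallP /= H.
  have E : \sum_g p g = p gs.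
    rewrite (bigD1 gs) //= big1 ?addr0 // => g gn; by move: (H g); rewrite gn.
  by rewrite -E p1.
have key : forall t, feasible t -> 
   \sum_g p g * t g ^+ 2 <= 2 * p gs - \sum_(g | g != gs) (p gs - p g) * t g ^+ 2.
  move=> t [t0 ts].
  have E : \sum_g p g * t g ^+ 2 = p gs * \sum_g t g ^+ 2 - \sum_(g | g != gs) (p gs - p g) * t g ^+ 2.
    rewrite mulr_sumr (bigD1 gs) //= [X in _ = X - _](bigD1 gs) //=.
    rewrite [X in _ = _ - X](eq_bigr (fun g => p gs * t g ^+ 2 - p g * t g ^+ 2)); last by move=> g _; ring.
    rewrite sumrB; ring.
  rewrite E lerD2r mulrC; apply: ler_wpM2r => //; exact: ltW.
have nn : forall t : T -> R, 0 <= \sum_(g | g != gs) (p gs - p g) * t g ^+ 2.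
  move=> t; apply: sumr_ge0 => g /pmax pg; apply: mulr_ge0; rewrite ?sqr_ge0 //; lra.
have maxs : is_maximizer p sigma ss.
  split; first exact: fs.
  move=> t ft; rewrite Fs; apply: le_trans (Ft t ft) _.
  rewrite lerD2l (mulrC 2 K) -mulrA (ler_pM2l K0).
  apply: le_trans (key t ft) _; have := nn t; lra.
split; first exact: maxs.
move=> t [ft tmax].
have H1 := tmax ss fs; rewrite Fs in H1.
have H2 := le_trans H1 (Ft t ft).
have H3 : 2 * p gs <= \sum_g p g * t g ^+ 2.
  by rewrite (mulrC 2 K) -mulrA lerD2l (ler_pM2l K0) in H2.
have H4 := le_trans H3 (key t ft).
have H5 : \sum_(g | g != gs) (p gs - p g) * t g ^+ 2 = 0.
  apply/eqP; rewrite eq_le nn andbT; lra.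
have tz : forall g, g != gs -> t g = 0.
  move=> g gn; move/eqP: H5; rewrite psumr_eq0 => [/allP H|j /pmax pj]; last first.
    apply: mulr_ge0; rewrite ?sqr_ge0 //; lra.
  have := H g (mem_index_enum g); rewrite gn /= mulf_eq0 sqrf_eq0 => /orP[|/eqP//].
  by rewrite subr_eq0 => /eqP pe; have := pmax g gn; rewrite pe ltxx.
apply/funext => g; rewrite /ss; case: ifP => [/eqP ->|/negbT gn]; last exact: tz.
have E : \sum_g p g * t g ^+ 2 = p gs * t gs ^+ 2.
  rewrite (bigD1 gs) //= big1 ?addr0 // => i /tz ->; rewrite expr0n mulr0 //.
rewrite E in H3; have tg2 : 2 <= t gs ^+ 2 by rewrite -(ler_pM2l pgs0) mulrC.
have := @feas_le _ _ t gs ft; have := ft.1 gs; rewrite -/r => t0 tr; nra.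
Qed.

Lemma cmvt0 (R : realType) (sigma dsigma : R -> R) (a b : R) :
  (forall x : R, 0 < x -> is_derive x 1 sigma (dsigma x)) ->
  (fun t : R => (sigma t - sigma 0) / t) @ (0:R)^'+ --> dsigma 0 ->
  0 <= a -> a < b ->
  exists2 c, a < c < b & sigma b - sigma a = (dsigma c / c) / 2 * (b ^+ 2 - a ^+ 2).
Proof.
move=> der d0 a0 ab.
have [c /andP[ac cb] E] := cmvt ab (fun x ax => der x (le_lt_trans a0 ax)) (sig_within a0 ab der d0).
have c0 : 0 < c by exact: le_lt_trans ac.
exists c; first by rewrite ac cb.
apply: (mulIf (x := 2 * c)); first by rewrite mulf_neq0 // gt_eqF.
rewrite E; field; rewrite gt_eqF //.
Qed.

Lemma A_bound (R : realType) (sigma dsigma : R -> R) :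
  (forall x : R, 0 < x -> is_derive x 1 sigma (dsigma x)) ->
  (fun t : R => (sigma t - sigma 0) / t) @ (0:R)^'+ --> dsigma 0 ->
  (forall x : R, 0 < x -> 0 < dsigma x) ->
  (forall x y : R, 0 < x -> x <= y -> y <= Num.sqrt 2 -> dsigma x / x <= dsigma y / y) ->
  sigma 0 < sigma (Num.sqrt 2) /\
  (forall s, 0 <= s <= Num.sqrt 2 -> sigma s - sigma 0 <= (sigma (Num.sqrt 2) - sigma 0) / 2 * s ^+ 2).
Proof.
move=> der d0 dpos mono.
have [r0 r2] := sqrt2_facts R; move: r0 r2 mono; set r := Num.sqrt 2 => r0 r2 mono.
split.
  have [c /andP[c0 cr] E] := cmvt0 der d0 (lexx 0) r0.
  rewrite -subr_gt0 E; apply: mulr_gt0; last by rewrite r2 expr0n /= subr0.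
  apply: divr_gt0 => //; apply: divr_gt0 => //; exact: dpos.
move=> s /andP[s0 sr].
have [se|sp] := eqVneq s 0; first by rewrite se subrr expr0n /= mulr0.
have {sp} sp : 0 < s by rewrite lt_neqAle eq_sym sp s0.
have [ser|slt] := eqVneq s r.
  by rewrite ser r2 divfK ?pnatr_eq0.
have {slt} slt : s < r by rewrite lt_neqAle slt sr.
have [c /andP[c0 cs] E1] := cmvt0 der d0 (lexx 0) sp.
have [d /andP[sd dr] E2] := cmvt0 der d0 s0 slt.
have phicd : dsigma c / c <= dsigma d / d.
  apply: mono; rewrite ?(ltW dr) //; apply: ltW; exact: lt_trans sd.
have Esum : sigma r - sigma 0 = (sigma s - sigma 0) + (sigma r - sigma s) by ring.
rewrite Esum E1 E2 r2 expr0n /= subr0.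
set P := dsigma c / c in phicd *; set Q := dsigma d / d in phicd *.
have s2 : s ^+ 2 <= 2 by rewrite -r2 ler_pXn2r // nnegrE ltW.
have s2p : 0 <= s ^+ 2 by exact: sqr_ge0.
rewrite -subr_ge0.
have -> : (P / 2 * s ^+ 2 + Q / 2 * (2 - s ^+ 2)) / 2 * s ^+ 2 - P / 2 * s ^+ 2
   = s ^+ 2 * (Q - P) * (2 - s ^+ 2) / 4 by field.
apply: divr_ge0 => //; apply: mulr_ge0; [apply: mulr_ge0|]; rewrite ?subr_ge0 //.
Qed.
Lemma phi0_props (R : realType) (phi : R -> R) :
  (forall x y : R, 0 < x -> x < y -> phi y < phi x) ->
  (forall x : R, 0 < x -> ((phi x)%:E < phi0plus phi)%E) /\
  (forall v : R, (v%:E < phi0plus phi)%E -> exists2 x, 0 < x & v < phi x).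
Proof.
move=> dec.
have ni : {in Interval (BRight (0:R)) (BInfty R false) &, nonincreasing_fun (fun x => (phi x)%:E)}.
  move=> x y; rewrite !in_itv /= !andbT => x0 y0 xy; rewrite lee_fin.
  have [->|xy'] := eqVneq x y; first exact: lexx.
  by apply: ltW; apply: dec => //; rewrite lt_neqAle xy' xy.
have cv := @nonincreasing_at_right_cvge R (fun x => (phi x)%:E) 0 (BInfty R false) isT ni.
have E : phi0plus phi = ereal_sup ((fun x => (phi x)%:E) @` [set` Interval (BRight (0:R)) (BInfty R false)]).
  rewrite /phi0plus; exact: cvg_lim cv.
rewrite E; split.
  move=> x x0; apply: (@lt_le_trans _ _ (phi (x / 2))%:E).
    rewrite lte_fin; apply: dec; rewrite ?divr_gt0 //; rewrite ltr_pdivrMr //; lra.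
  apply: ereal_sup_ubound; exists (x / 2); last by [].
  by rewrite /= in_itv /= andbT divr_gt0.
move=> v /ereal_sup_gt [y [x xA <-]]; rewrite lte_fin => vx.
exists x => //; move: xA; by rewrite /= in_itv /= andbT.
Qed.
Definition phinv (R : realType) (phi : R -> R) (v : R) : R :=
  xget 0 [set x | 0 < x /\ phi x = v].

Lemma phidec_inj (R : realType) (phi : R -> R) :
  (forall x y : R, 0 < x -> x < y -> phi y < phi x) ->
  forall x y : R, 0 < x -> 0 < y -> phi x <= phi y -> y <= x.
Proof.
move=> dec x y x0 y0 le; rewrite leNgt; apply/negP => xy.
by have := dec x y x0 xy; rewrite ltNge le.
Qed.

Lemma inv_spec (R : realType) (phi : R -> R) :
  (forall x y : R, 0 < x -> x < y -> phi y < phi x) ->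
  (forall x : R, 0 < x -> {for x, continuous phi}) ->
  forall y v : R, 0 < y -> phi y <= v -> (v%:E < phi0plus phi)%E ->
  [/\ 0 < phinv phi v, phinv phi v <= y & phi (phinv phi v) = v].
Proof.
move=> dec cont y v y0 yv vlt.
have [_ L2] := phi0_props dec.
have ex : exists x, 0 < x /\ phi x = v.
  have [<-|yv'] := eqVneq (phi y) v; first by exists y.
  have {yv'} yv' : phi y < v by rewrite lt_neqAle yv' yv.
  have [e e0 ve] := L2 v vlt.
  have ey : e <= y.
    rewrite leNgt; apply/negP => ye; have := dec y e y0 ye; lra.
  have cw : {within `[e, y], continuous phi}.
    apply/continuous_in_subspaceT => z /[1!inE]; rewrite /= in_itv /= => /andP[ez _].
    apply: cont; exact: lt_le_trans ez.
  have phiey : phi y <= phi e.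
    have [->|ne] := eqVneq e y; first exact: lexx.
    by apply: ltW; apply: dec => //; rewrite lt_neqAle ne ey.
  have H : Num.min (phi e) (phi y) <= v <= Num.max (phi e) (phi y).
    by rewrite (min_r phiey) (max_l phiey) yv ltW.
  have [c] := IVT ey cw H.
  rewrite in_itv /= => /andP[ec _] cv; exists c; split => //; exact: lt_le_trans ec.
have := xgetPex 0 ex; rewrite -/(phinv phi v) => -[i0 iv]; split => //.
apply: (phidec_inj dec) => //; rewrite iv //.
Qed.
Definition actv (R : realType) (T : finType) (p : T -> R) (phi0 : \bar R) (lam : R) (g : T) : Prop :=
  0 < p g /\ ((2 * lam / p g)%:E < phi0)%E.
Definition lamy (R : realType) (T : finType) (p : T -> R) gs (phi : R -> R) (y : R) : R :=
  p gs * phi y / 2.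
Definition xs (R : realType) (T : finType) (p : T -> R) gs (phi : R -> R) (y : R) (g : T) : R :=
  if pselect (actv p (phi0plus phi) (lamy p gs phi y) g)
  then phinv phi (2 * lamy p gs phi y / p g) else 0.

Lemma xs_spec (R : realType) (T : finType) (p : T -> R) gs (phi : R -> R) :
  (forall x y : R, 0 < x -> x < y -> phi y < phi x) ->
  (forall x : R, 0 < x -> {for x, continuous phi}) ->
  (forall x : R, 0 < x -> 0 < phi x) ->
  (forall g, p g <= p gs) ->
  forall y g, 0 < y ->
  (0 <= xs p gs phi y g <= y) /\
  (actv p (phi0plus phi) (lamy p gs phi y) g ->
     0 < xs p gs phi y g /\ phi (xs p gs phi y g) = 2 * lamy p gs phi y / p g).
Proof.
move=> dec cont pos ple y g y0.
have H : actv p (phi0plus phi) (lamy p gs phi y) g ->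
   [/\ 0 < xs p gs phi y g, xs p gs phi y g <= y & phi (xs p gs phi y g) = 2 * lamy p gs phi y / p g].
  move=> a; rewrite /xs; case: pselect => // ?.
  case: (a) => pg vlt; apply: inv_spec => //.
  rewrite /lamy ler_pdivlMr //.
  have -> : 2 * (p gs * phi y / 2) = phi y * p gs by field.
  by rewrite ler_pM2l ?pos ?ple.
split; last by move=> /H [].
have [a|na] := pselect (actv p (phi0plus phi) (lamy p gs phi y) g).
  by have [x0 xy _] := H a; rewrite (ltW x0) xy.
by rewrite /xs; case: pselect => // ?; rewrite lexx ltW.
Qed.

Lemma phidec_lt (R : realType) (phi : R -> R) :
  (forall x y : R, 0 < x -> x < y -> phi y < phi x) ->
  forall x y : R, 0 < x -> 0 < y -> phi x < phi y -> x > y.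
Proof.
move=> dec x y x0 y0 lt; rewrite ltNge; apply/negP => xy.
have [e|ne] := eqVneq x y; first by move: lt; rewrite e ltxx.
have := dec x y x0; rewrite lt_neqAle ne xy => /(_ isT); lra.
Qed.

Lemma near_pos (R : realType) (y0 : R) : 0 < y0 -> \forall t \near y0, 0 < t.
Proof.
exact: lt_nbhsr.
Qed.

Lemma minle1 (R : realType) (x y : R) : Num.min x y <= x.
Proof. by rewrite ge_min lexx. Qed.
Lemma minle2 (R : realType) (x y : R) : Num.min x y <= y.
Proof. by rewrite ge_min lexx orbT. Qed.

Lemma xs_cont (R : realType) (T : finType) (p : T -> R) gs (phi : R -> R) :
  (forall x y : R, 0 < x -> x < y -> phi y < phi x) ->
  (forall x : R, 0 < x -> {for x, continuous phi}) ->
  (forall x : R, 0 < x -> 0 < phi x) ->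
  (forall g, p g <= p gs) ->
  forall y0 g, 0 < y0 -> {for y0, continuous (fun y => xs p gs phi y g)}.
Proof.
move=> dec cont pos ple y0 g y00.
have [L1 _] := phi0_props dec.
have [pg|pg] := ltP 0 (p g); last first.
  have -> : (fun y => xs p gs phi y g) = fun _ => 0.
    apply/funext => y; rewrite /xs; case: pselect => [[pg' ?]|//].
    by have := lt_le_trans pg' pg; rewrite ltxx.
  exact: cvg_cst.
pose w := (p gs / p g) \*: phi.
have wE : forall y, 2 * lamy p gs phi y / p g = w y.
  by move=> y; rewrite /w /lamy /= /GRing.scale /=; field; rewrite gt_eqF.
have wc : {for y0, continuous w} by apply: continuousZl_tmp; exact: cont.
apply/cvgrPdist_lt => e e0.
have tpos := near_pos y00.
have [a0|na0] := pselect (actv p (phi0plus phi) (lamy p gs phi y0) g).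
  have [_ /(_ a0) [xa fa]] := xs_spec dec cont pos ple g y00.
  move: xa fa; set a := xs p gs phi y0 g => xa fa; rewrite wE in fa.
  set e' := Num.min e a / 2.
  have e'0 : 0 < e' by rewrite divr_gt0 // lt_min e0 xa.
  have e'a : e' < a by rewrite /e' ltr_pdivrMr // (le_lt_trans (minle2 _ _)) //; lra.
  have e'e : e' < e by rewrite /e' ltr_pdivrMr // (le_lt_trans (minle1 _ _)) //; lra.
  have ae0 : 0 < a - e' by lra.
  set hi := phi (a - e'); set lo := phi (a + e').
  have hiw : w y0 < hi by rewrite -fa; apply: dec => //; lra.
  have low : lo < w y0 by rewrite -fa; apply: dec => //; lra.
  set d := Num.min (w y0 - lo) (hi - w y0).
  have d0 : 0 < d by rewrite lt_min !subr_gt0 hiw low.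
  have wn := (cvgrPdist_lt _ _).1 wc d d0.
  near=> t.
  have t0 : 0 < t by near: t; exact: tpos.
  have wt : `|w y0 - w t| < d by near: t; exact: wn.
  move: wt; rewrite ltr_norml => /andP[w1 w2].
  have d1 : d <= w y0 - lo by exact: minle1.
  have d2 : d <= hi - w y0 by exact: minle2.
  have at0 : actv p (phi0plus phi) (lamy p gs phi t) g.
    split => //; rewrite wE; apply: (@lt_trans _ _ hi%:E); first by rewrite lte_fin; lra.
    exact: L1.
  have [_ /(_ at0) [xt ft]] := xs_spec dec cont pos ple g t0.
  rewrite wE in ft.
  have x1 : a - e' < xs p gs phi t g by apply: (phidec_lt dec) => //; rewrite ft -/hi; lra.
  have x2 : xs p gs phi t g < a + e'.
    by apply: (phidec_lt dec) => //; [lra | rewrite ft -/lo; lra].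
  rewrite -/a ltr_norml; apply/andP; split; lra.
have xa : xs p gs phi y0 g = 0 by rewrite /xs; case: pselect.
have le0 : (phi0plus phi <= (w y0)%:E)%E.
  rewrite leNgt; apply/negP => H; apply: na0; split => //; by rewrite wE.
have ew : phi e < w y0 by rewrite -lte_fin; exact: lt_le_trans (L1 e e0) le0.
have d0 : 0 < w y0 - phi e by rewrite subr_gt0.
have wn := (cvgrPdist_lt _ _).1 wc _ d0.
near=> t.
have t0 : 0 < t by near: t; exact: tpos.
have wt : `|w y0 - w t| < w y0 - phi e by near: t; exact: wn.
move: wt; rewrite ltr_norml => /andP[w1 w2].
rewrite xa sub0r normrN.
have [/andP[xt0 xty] H] := xs_spec dec cont pos ple g t0.
have [at0|nat0] := pselect (actv p (phi0plus phi) (lamy p gs phi t) g).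
  have [xp fx] := H at0; rewrite wE in fx; rewrite ger0_norm //.
  by apply: (phidec_lt dec) => //; rewrite fx; lra.
have -> : xs p gs phi t g = 0 by rewrite /xs; case: pselect.
by rewrite normr0.
Unshelve. all: by end_near.
Qed.
Lemma Tcont (R : realType) (T : finType) (p : T -> R) gs (phi : R -> R) :
  (forall x y : R, 0 < x -> x < y -> phi y < phi x) ->
  (forall x : R, 0 < x -> {for x, continuous phi}) ->
  (forall x : R, 0 < x -> 0 < phi x) ->
  (forall g, p g <= p gs) ->
  forall y0, 0 < y0 -> {for y0, continuous (fun y => \sum_g xs p gs phi y g ^+ 2)}.
Proof.
move=> dec cont pos ple y0 y00.
apply: (@cvg_big _ _ +%R 0 xpredT add_continuous) => g _.
have c := @xs_cont _ _ p gs phi dec cont pos ple y0 g y00.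
rewrite expr2; exact: (continuousM c c).
Qed.

Lemma xs_gs (R : realType) (T : finType) (p : T -> R) gs (phi : R -> R) :
  (forall x y : R, 0 < x -> x < y -> phi y < phi x) ->
  (forall x : R, 0 < x -> {for x, continuous phi}) ->
  (forall x : R, 0 < x -> 0 < phi x) ->
  (forall g, p g <= p gs) -> 0 < p gs ->
  forall y : R, 0 < y -> xs p gs phi y gs = y.
Proof.
move=> dec cont pos ple pgs0 y y0.
have [L1 _] := phi0_props dec.
have E : 2 * lamy p gs phi y / p gs = phi y.
  by rewrite /lamy; field; rewrite gt_eqF.
have ac : actv p (phi0plus phi) (lamy p gs phi y) gs by split => //; rewrite E; exact: L1.
have [_ /(_ ac) [x0 fx]] := xs_spec dec cont pos ple gs y0.
rewrite E in fx.
apply/eqP; rewrite eq_le; apply/andP; split.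
  by apply: (phidec_inj dec) => //; rewrite fx.
by apply: (phidec_inj dec) => //; rewrite fx.
Qed.

Lemma exists_y (R : realType) (T : finType) (p : T -> R) gs (phi : R -> R) :
  (forall x y : R, 0 < x -> x < y -> phi y < phi x) ->
  (forall x : R, 0 < x -> {for x, continuous phi}) ->
  (forall x : R, 0 < x -> 0 < phi x) ->
  (forall g, p g <= p gs) -> 0 < p gs ->
  exists2 y, 0 < y & \sum_g xs p gs phi y g ^+ 2 = 2.
Proof.
move=> dec cont pos ple pgs0.
have [r0 r2] := sqrt2_facts R; move: r0 r2; set r := Num.sqrt 2 => r0 r2.
set Tf := fun y => \sum_g xs p gs phi y g ^+ 2.
set N : R := #|T|%:R.
have N0 : 0 <= N by exact: ler0n.
set a := r / (N + 1).
have N1 : 0 < N + 1 by lra.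
have a0 : 0 < a by exact: divr_gt0.
have ar : a <= r by rewrite /a ler_pdivrMr // ler_peMr //; [exact: ltW | lra].
have Ta : Tf a <= 2.
  apply: (@le_trans _ _ (\sum_(g : T) a ^+ 2)).
    apply: ler_sum => g _.
    have [/andP[x0 xa] _] := xs_spec dec cont pos ple g a0.
    rewrite !expr2; exact: ler_pM.
  have E : \sum_(g : T) a ^+ 2 = a ^+ 2 *+ #|T| := sumr_const T (a ^+ 2).
  rewrite E -mulr_natr -/N.
  have -> : a ^+ 2 * N = 2 * (N / (N + 1) ^+ 2).
    by rewrite /a expr_div_n r2; field; rewrite gt_eqF.
  rewrite -[X in _ <= X]mulr1 ler_pM2l // ler_pdivrMr ?exprn_gt0 // mul1r; nra.
have Tr : 2 <= Tf r.
  rewrite /Tf; apply: le_trans (@le_sum1 R T (fun j => xs p gs phi r j ^+ 2) gs (fun j => sqr_ge0 _)).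
  by rewrite xs_gs // r2.
have cw : {within `[a, r], continuous Tf}.
  apply/continuous_in_subspaceT => z /[1!inE]; rewrite /= in_itv /= => /andP[az _].
  apply: Tcont => //; exact: lt_le_trans az.
have H : Num.min (Tf a) (Tf r) <= 2 <= Num.max (Tf a) (Tf r).
  by rewrite ge_min Ta le_max Tr orbT.
have [c] := IVT ar cw H.
rewrite in_itv /= => /andP[ac _] Tc; exists c => //; exact: lt_le_trans ac.
Qed.
Definition goodv (R : realType) (T : finType) (p : T -> R) (phi : R -> R) (lam : R) (s : T -> R) : Prop :=
  (forall g, actv p (phi0plus phi) lam g -> 0 < s g /\ phi (s g) = 2 * lam / p g) /\
  (forall g, ~ actv p (phi0plus phi) lam g -> s g = 0).

Lemma good_ge0 (R : realType) (T : finType) (p : T -> R) (phi : R -> R) lam s :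
  goodv p phi lam s -> forall g, 0 <= s g.
Proof.
move=> [H1 H2] g; have [a|na] := pselect (actv p (phi0plus phi) lam g).
  exact: ltW (H1 g a).1.
by rewrite H2.
Qed.

Lemma lam_lt (R : realType) (T : finType) (p : T -> R) (phi : R -> R) l1 l2 s1 s2 :
  (forall x y : R, 0 < x -> x < y -> phi y < phi x) ->
  0 < l1 -> goodv p phi l1 s1 -> goodv p phi l2 s2 -> l1 < l2 ->
  \sum_g s2 g ^+ 2 = 2 -> \sum_g s2 g ^+ 2 < \sum_g s1 g ^+ 2.
Proof.
move=> dec l10 G1 G2 l12 S2.
have s10 := good_ge0 G1; have s20 := good_ge0 G2.
case: G1 G2 => [A1 N1] [A2 N2].
have key : forall g, actv p (phi0plus phi) l2 g -> s2 g < s1 g.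
  move=> g a2; case: (a2) => pg v2.
  have a1 : actv p (phi0plus phi) l1 g.
    split => //; apply: le_lt_trans v2; rewrite lee_fin ler_pM2r ?invr_gt0 //.
    by rewrite ler_pM2l //; exact: ltW.
  have [x1 f1] := A1 g a1; have [x2 f2] := A2 g a2.
  apply: (phidec_lt dec) => //; rewrite f1 f2 ltr_pM2r ?invr_gt0 // ltr_pM2l //.
have le : forall g, s2 g <= s1 g.
  move=> g; have [a|na] := pselect (actv p (phi0plus phi) l2 g).
    exact: ltW (key g a).
  by rewrite N2.
have [g0 ng0] : exists g, s2 g != 0.
  apply/not_existsP => H; move: S2; rewrite big1 => [/eqP|g _].
    by rewrite eq_sym pnatr_eq0.
  by have /negP := H g; rewrite negbK => /eqP ->; rewrite expr0n.
have a0 : actv p (phi0plus phi) l2 g0.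
  by apply/not_notP => na; move: ng0; rewrite N2 // eqxx.
rewrite (bigD1 g0) //= [X in _ < X](bigD1 g0) //=.
apply: ltr_leD.
  rewrite !expr2; apply: ltr_pM => //; exact: key.
apply: ler_sum => g _; rewrite !expr2; apply: ler_pM => //.
Qed.

Lemma lam_unique (R : realType) (T : finType) (p : T -> R) (phi : R -> R) l1 l2 s1 s2 :
  (forall x y : R, 0 < x -> x < y -> phi y < phi x) ->
  0 < l1 -> 0 < l2 -> goodv p phi l1 s1 -> goodv p phi l2 s2 ->
  \sum_g s1 g ^+ 2 = 2 -> \sum_g s2 g ^+ 2 = 2 -> l1 = l2.
Proof.
move=> dec l10 l20 G1 G2 S1 S2.
have [l12|l21|//] := ltgtP l1 l2.
  by have := lam_lt dec l10 G1 G2 l12 S2; rewrite S1 S2 ltxx.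
by have := lam_lt dec l20 G2 G1 l21 S1; rewrite S1 S2 ltxx.
Qed.

Lemma kkt_point (R : realType) (T : finType) (p : T -> R) (sigma dsigma : R -> R) lam s g x :
  (forall x : R, 0 < x -> is_derive x 1 sigma (dsigma x)) ->
  (fun t : R => (sigma t - sigma 0) / t) @ (0:R)^'+ --> dsigma 0 ->
  (forall x y : R, 0 < x -> x < y -> dsigma y / y < dsigma x / x) ->
  (forall g, 0 <= p g) -> 0 < lam ->
  goodv p (fun y => dsigma y / y) lam s -> 0 <= x ->
  p g * (sigma x - sigma (s g)) <= lam * (x ^+ 2 - s g ^+ 2) /\
  (x != s g -> p g * (sigma x - sigma (s g)) < lam * (x ^+ 2 - s g ^+ 2)).
Proof.
move=> der d0 dec p0 l0 G x0.
set phi := fun y => dsigma y / y.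
have [L1 _] := phi0_props dec.
suff st : x != s g -> p g * (sigma x - sigma (s g)) < lam * (x ^+ 2 - s g ^+ 2).
  split => //; have [e|ne] := eqVneq x (s g); first by rewrite e !subrr !mulr0.
  exact: ltW (st ne).
move=> ne.
have sg0 := good_ge0 G g.
case: G => [A N].
have [a|na] := pselect (actv p (phi0plus phi) lam g).
  have [y0 fy] := A g a; case: a => pg _.
  set y := s g in ne y0 fy sg0 *.
  have [xy|yx] := ltP x y.
    have [c /andP[xc cy] E] := cmvt0 der d0 x0 xy.
    have c0 : 0 < c by exact: le_lt_trans xc.
    have pc : dsigma y / y < dsigma c / c by apply: dec.
    rewrite fy in pc.
    have -> : sigma x - sigma y = - (sigma y - sigma x) by ring.
    rewrite E.
    have h2 : 0 < y ^+ 2 - x ^+ 2.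
      by rewrite subr_gt0 ltr_pXn2r // nnegrE ?(ltW y0).
    rewrite -subr_gt0.
    have -> : lam * (x ^+ 2 - y ^+ 2) - p g * - (dsigma c / c / 2 * (y ^+ 2 - x ^+ 2))
       = p g * (dsigma c / c - 2 * lam / p g) / 2 * (y ^+ 2 - x ^+ 2).
      by field; rewrite (gt_eqF pg) (gt_eqF c0).
    by apply: mulr_gt0 => //; apply: divr_gt0 => //; apply: mulr_gt0; rewrite ?subr_gt0.
  have {yx} yx : y < x by rewrite lt_neqAle eq_sym ne yx.
  have [c /andP[yc cx] E] := cmvt0 der d0 sg0 yx.
  have c0 : 0 < c by exact: lt_trans yc.
  have pc : dsigma c / c < dsigma y / y by apply: dec.
  rewrite fy in pc.
  rewrite E.
  have h2 : 0 < x ^+ 2 - y ^+ 2.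
    by rewrite subr_gt0 ltr_pXn2r // nnegrE ?(ltW y0).
  rewrite -subr_gt0.
  have -> : lam * (x ^+ 2 - y ^+ 2) - p g * (dsigma c / c / 2 * (x ^+ 2 - y ^+ 2))
     = p g * (2 * lam / p g - dsigma c / c) / 2 * (x ^+ 2 - y ^+ 2).
    by field; rewrite (gt_eqF pg) (gt_eqF c0).
  by apply: mulr_gt0 => //; apply: divr_gt0 => //; apply: mulr_gt0; rewrite ?subr_gt0.
have sg : s g = 0 := N g na.
rewrite sg in ne *; rewrite expr0n /= subr0.
have xp : 0 < x by rewrite lt_neqAle eq_sym ne x0.
have [pg|pg] := ltP 0 (p g); last first.
  have -> : p g = 0 by apply/eqP; rewrite eq_le pg p0.
  by rewrite mul0r; apply: mulr_gt0 => //; exact: exprn_gt0.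
have le0 : (phi0plus phi <= (2 * lam / p g)%:E)%E.
  rewrite leNgt; apply/negP => H; exact: na.
have [c /andP[c0 cx] E] := cmvt0 der d0 (lexx 0) xp.
rewrite E expr0n /= subr0.
have pc : dsigma c / c < 2 * lam / p g by rewrite -lte_fin; exact: lt_le_trans (L1 c c0) le0.
rewrite -subr_gt0.
have -> : lam * x ^+ 2 - p g * (dsigma c / c / 2 * x ^+ 2)
   = p g * (2 * lam / p g - dsigma c / c) / 2 * x ^+ 2.
  by field; rewrite (gt_eqF pg) (gt_eqF c0).
by apply: mulr_gt0; rewrite ?exprn_gt0 //; apply: divr_gt0 => //; apply: mulr_gt0; rewrite ?subr_gt0.
Qed.

Lemma kkt (R : realType) (T : finType) (p : T -> R) (sigma dsigma : R -> R) lam s :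
  (forall x : R, 0 < x -> is_derive x 1 sigma (dsigma x)) ->
  (fun t : R => (sigma t - sigma 0) / t) @ (0:R)^'+ --> dsigma 0 ->
  (forall x y : R, 0 < x -> x < y -> dsigma y / y < dsigma x / x) ->
  (forall g, 0 <= p g) -> 0 < lam ->
  goodv p (fun y => dsigma y / y) lam s -> \sum_g s g ^+ 2 = 2 ->
  unique_maximizer p sigma s.
Proof.
move=> der d0 dec p0 l0 G S.
have fs : feasible s by split; [exact: good_ge0 G | rewrite S].
have base : forall t : T -> R, feasible t ->
    objF p sigma t - objF p sigma s = \sum_g p g * (sigma (t g) - sigma (s g)).
  by move=> t _; rewrite /objF -sumrB; apply: eq_bigr => g _; ring.
have bnd : forall t : T -> R, feasible t ->
    \sum_g p g * (sigma (t g) - sigma (s g)) <= lam * (\sum_g t g ^+ 2 - 2).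
  move=> t [t0 ts]; rewrite -S -sumrB mulr_sumr; apply: ler_sum => g _.
  exact: (kkt_point g der d0 dec p0 l0 G (t0 g)).1.
have neg : forall t : T -> R, feasible t -> lam * (\sum_g t g ^+ 2 - 2) <= 0.
  move=> t [_ ts]; apply: mulr_ge0_le0; [exact: ltW | lra].
have maxs : is_maximizer p sigma s.
  split; first exact: fs.
  move=> t ft; rewrite -subr_le0 base //; exact: le_trans (bnd t ft) (neg t ft).
split; first exact: maxs.
move=> t [ft tmax]; apply/funext => g0.
apply/eqP; apply/negPn/negP => ne.
have strict : \sum_g p g * (sigma (t g) - sigma (s g)) < lam * (\sum_g t g ^+ 2 - 2).
  move: ft => [t0 ts]; rewrite -S -sumrB mulr_sumr.
  rewrite (bigD1 g0) //= [X in _ < X](bigD1 g0) //=.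
  apply: ltr_leD.
    exact: (kkt_point g0 der d0 dec p0 l0 G (t0 g0)).2 ne.
  apply: ler_sum => g _; exact: (kkt_point g der d0 dec p0 l0 G (t0 g)).1.
have := tmax s fs; rewrite -subr_ge0 base //.
have := neg t ft; lra.
Qed.

Lemma pgs_pos (R : realType) (T : finType) (p : T -> R) gs :
  (forall g, 0 <= p g) -> \sum_g p g = 1 -> (forall g, g != gs -> p g < p gs) -> 0 < p gs.
Proof.
move=> p0 p1 pmax.
case: (boolP [exists g, g != gs]) => [/existsP [g /[dup] gn /pmax]|].
  by apply: le_lt_trans; exact: p0.
rewrite negb_exists => /forallP /= H.
have E : \sum_g p g = p gs.
  rewrite (bigD1 gs) //= big1 ?addr0 // => g gn; by move: (H g); rewrite gn.
by rewrite -E p1.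
Qed.

Unset Implicit Arguments.

Theorem mainTheorem7 (R : realType) (gT : finGroupType) (h gstar : gT)
  (p : gT -> R) (sigma dsigma : R -> R)
  (p_ge0 : forall g, 0 <= p g)
  (p_sum1 : \sum_(g : gT) p g = 1)
  (p_max : forall g, g != gstar -> p g < p gstar)
  (sigma_der : forall x : R, 0 < x -> is_derive x 1 sigma (dsigma x))
  (sigma_der0 : (fun t : R => (sigma t - sigma 0) / t) @ (0:R)^'+ --> dsigma 0)
  (dsigma_cont : {within `[0, +oo[, continuous dsigma})
  (sigma_incr : forall x y : R, 0 < x -> x < y -> sigma x < sigma y)
  (dsigma_pos : forall x : R, 0 < x -> 0 < dsigma x)
  (phi_cont : forall x : R, 0 < x -> {for x, continuous (fun y : R => dsigma y / y)}) :
  let phi := fun y : R => dsigma y / y in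
  ((forall x y : R, 0 < x -> x <= y -> y <= Num.sqrt 2 -> phi x <= phi y) ->
     let sstar := fun g : gT => if g == gstar then Num.sqrt 2 else 0 : R in
     let u := fun g : gT => if g == gstar then (Num.sqrt 2)^-1 else 0 : R in
     let v := fun g : gT => if g == (gstar^-1 * h)%g then (Num.sqrt 2)^-1 else 0 : R in
     unique_maximizer p sigma sstar /\
     (\sum_(g : gT) u g ^+ 2 + \sum_(g : gT) v g ^+ 2 = 1) /\
     (forall g, sstar g = u g + v (g^-1 * h)%g))
  /\
  ((forall x y : R, 0 < x -> x < y -> phi y < phi x) ->
     let active := fun (lam : R) (g : gT) =>
       0 < p g /\ ((2 * lam / p g)%:E < phi0plus phi)%E in
     let good := fun (lam : R) (s : gT -> R) =>
       (forall g, active lam g -> 0 < s g /\ phi (s g) = 2 * lam / p g) /\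
       (forall g, ~ active lam g -> s g = 0) in
     exists lam : R, exists sstar : gT -> R,
       0 < lam /\ good lam sstar /\ \sum_(g : gT) sstar g ^+ 2 = 2 /\
       (forall lam' s', 0 < lam' -> good lam' s' ->
          \sum_(g : gT) s' g ^+ 2 = 2 -> lam' = lam) /\
       unique_maximizer p sigma sstar /\
       (phi0plus phi = +oo%E ->
          (forall g, 0 < p g -> 0 < sstar g) /\
          (forall i j, p j < p i -> sstar j < sstar i))).
Proof.
move=> phi.
have [r0 r2] := sqrt2_facts R.
have pgs0 := pgs_pos p_ge0 p_sum1 p_max.
split.
  move=> mono sstar u v.
  have [sig hb] := A_bound sigma_der sigma_der0 dsigma_pos mono.
  split; first exact: partA p_ge0 p_sum1 p_max sig hb.
  have rn0 : Num.sqrt (2:R) != 0 by rewrite gt_eqF.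
  have su : \sum_(g : gT) u g ^+ 2 = (Num.sqrt 2)^-1 ^+ 2.
    rewrite (bigD1 gstar) //= /u eqxx big1 ?addr0 // => g /negbTE ->; exact: expr0n.
  have sv : \sum_(g : gT) v g ^+ 2 = (Num.sqrt 2)^-1 ^+ 2.
    rewrite (bigD1 (gstar^-1 * h)%g) //= /v eqxx big1 ?addr0 // => g /negbTE ->; exact: expr0n.
  split.
    by rewrite su sv exprVn r2; field.
  move=> g; rewrite /sstar /u /v.
  have -> : ((g^-1 * h)%g == (gstar^-1 * h)%g) = (g == gstar).
    by rewrite (inj_eq (mulIg h)) (inj_eq invg_inj).
  case: (g == gstar); last by rewrite addr0.
  by apply: (mulfI rn0); rewrite mulrDr mulfV // -expr2 r2; field.
move=> dec active good.
have pos : forall x : R, 0 < x -> 0 < phi x.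
  by move=> x x0; rewrite /phi divr_gt0 ?dsigma_pos.
have ple : forall g, p g <= p gstar.
  move=> g; have [->|ne] := eqVneq g gstar; first exact: lexx.
  exact: ltW (p_max g ne).
have [y y0 Sy] := exists_y dec phi_cont pos ple pgs0.
set lam := lamy p gstar phi y.
set s := xs p gstar phi y.
have l0 : 0 < lam by rewrite /lam /lamy divr_gt0 // mulr_gt0 // pos.
have G : goodv p phi lam s.
  split.
    move=> g a; exact: ((xs_spec dec phi_cont pos ple g y0).2 a).
  by move=> g na; rewrite /s /xs; case: pselect.
exists lam, s; split => //; split; first exact: G.
split => //; split.
  move=> l' s' l'0 G' S'; exact: (lam_unique dec l'0 l0 G' G S' Sy).
split; first exact: (kkt sigma_der sigma_der0 dec p_ge0 l0 G Sy).
move=> inf.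
have actp : forall g, 0 < p g -> actv p (phi0plus phi) lam g.
  by move=> g pg; split => //; rewrite inf ltry.
case: G => [A N].
split.
  move=> g pg; exact: (A g (actp g pg)).1.
move=> i j pji.
have pi0 : 0 < p i by exact: le_lt_trans (p_ge0 j) pji.
have [pj0|pj0] := ltP 0 (p j); last first.
  have na : ~ actv p (phi0plus phi) lam j by case=> pj; have := lt_le_trans pj pj0; rewrite ltxx.
  rewrite (N j na); exact: (A i (actp i pi0)).1.
have [si fi] := A i (actp i pi0); have [sj fj] := A j (actp j pj0).
apply: (phidec_lt dec) => //; rewrite fi fj.
have l2 : 0 < 2 * lam by rewrite mulr_gt0.
by rewrite (ltr_pM2l l2) ltf_pV2 ?posrE.
Qed.
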